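(* Let $\Bbbk$ be an algebraically closed field and $A\cong\bigoplus_{i=1}^n\Bbbk$ (a semisimple basic algebra). (i) An endofunctor $\mathrm{F}$ of $A\text{-}\mathrm{mod}$ is selfadjoint if and only if $M_{\mathrm{F}}$ is symmetric. (ii) Let $g(x),h(x)$ be polynomials with nonnegative integer coefficients. Then $\mathrm{F}\mapsto M_{\mathrm{F}}$ gives a one-to-one correspondence between isomorphism classes of endofunctors $\mathrm{F}$ of $A\text{-}\mathrm{mod}$ satisfying $g(\mathrm{F})\cong h(\mathrm{F})$ and solutions $X\in\mathrm{Mat}_{n\times n}(\mathbb{Z}_{\geq 0})$ of the matrix equation $g(X)=h(X)$; it restricts to a one-to-one correspondence between isomorphism classes of selfadjoint such endofunctors and symmetric such solutions.
   Context: $A\text{-}\mathrm{mod}$ is the category of finite-dimensional left $A$-modules; functors are additive and $\Bbbk$-linear. Let $L_1,\dots,L_n$ be the pairwise nonisomorphic simple $A$-modules. For an exact endofunctor $\mathrm{F}$, $M_{\mathrm{F}}\in\mathrm{Mat}_{n\times n}(\mathbb{Z}_{\geq0})$ is the matrix of the induced endomorphism of the Grothendieck group of $A\text{-}\mathrm{mod}$ in the basis $[L_1],\dots,[L_n]$. For a polynomial $p(x)=\sum_j c_jx^j$ with $c_j\in\mathbb{Z}_{\geq0}$, $p(\mathrm{F})$ denotes $\bigoplus_j c_j\mathrm{F}^j$ ($\mathrm{F}^0=\mathrm{ID}$, $\mathrm{F}^j$ the $j$-fold composite, $c\,\mathrm{H}$ the direct sum of $c$ copies of $\mathrm{H}$).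 A functor is selfadjoint if it is left adjoint to itself. *)

(* Defs.v *)
From HB Require Import structures.
From mathcomp Require Import all_boot all_order all_algebra.
Set Implicit Arguments. Unset Strict Implicit. Unset Printing Implicit Defensive.
Import GRing.Theory.
Local Open Scope ring_scope.

(* The algebra A = k^n = \bigoplus_{i=1}^n k, with pointwise operations.   *)
Section Alg.
Variables (k : fieldType) (n : nat).

Definition alg := {ffun 'I_n -> k}.
Definition aadd (a b : alg) : alg := [ffun i => a i + b i].
Definition ascale (c : k) (a : alg) : alg := [ffun i => c * a i].
Definition amul (a b : alg) : alg := [ffun i => a i * b i].
Definition aone : alg := [ffun => 1].
Definition aidem (i : 'I_n) : alg := [ffun x => (x == i)%:R].

(* Finite-dimensional left A-modules: the space k^d (column vectors) with  *)
(* a unital algebra homomorphism A -> End(k^d) = 'M_d; a acts by v |->     *)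
(* act a *m v.                                                             *)
Record amod := AMod {
  mdim : nat;
  act : alg -> 'M[k]_mdim;
  actD : forall a b, act (aadd a b) = act a + act b;
  actZ : forall c a, act (ascale c a) = c *: act a;
  act1 : act aone = 1%:M;
  actM : forall a b, act (amul a b) = act a *m act b
}.

Definition ishom (M N : amod) (f : 'M[k]_(mdim N, mdim M)) : Prop :=
  forall a, f *m act M a = act N a *m f.
Arguments ishom : clear implicits.

Program Definition msum (M N : amod) : amod :=
  @AMod (mdim M + mdim N) (fun a => block_mx (act M a) 0 0 (act N a)) _ _ _ _.
Next Obligation. by move=> * /=; rewrite !actD add_block_mx !addr0. Qed.
Next Obligation. by move=> * /=; rewrite !actZ scale_block_mx !scaler0. Qed.
Next Obligation. by move=> * /=; rewrite !act1 -scalar_mx_block. Qed.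
Next Obligation.
by move=> * /=; rewrite mulmx_block !actM !mulmx0 !mul0mx !addr0 !add0r.
Qed.

Program Definition mzero : amod := @AMod 0 (fun _ => 0) _ _ _ _.
Next Obligation. by move=> * /=; rewrite addr0. Qed.
Next Obligation. by move=> * /=; rewrite scaler0. Qed.
Next Obligation. by move=> * /=; rewrite [RHS]flatmx0. Qed.
Next Obligation. by move=> * /=; rewrite mulmx0. Qed.

Program Definition simple (j : 'I_n) : amod :=
  @AMod 1 (fun a => (a j)%:M) _ _ _ _.
Next Obligation. by move=> * /=; rewrite ffunE raddfD. Qed.
Next Obligation. by move=> * /=; rewrite ffunE scale_scalar_mx. Qed.
Next Obligation. by move=> * /=; rewrite ffunE. Qed.
Next Obligation. by move=> * /=; rewrite ffunE scalar_mxM. Qed.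

(* Additive k-linear endofunctors of A-mod.  fmap is given on all          *)
(* matrices but only its values on homomorphisms matter.                   *)
Record endofunctor := EndoFunctor {
  fobj : amod -> amod;
  fmap : forall M N : amod,
           'M[k]_(mdim N, mdim M) -> 'M[k]_(mdim (fobj N), mdim (fobj M));
  fmap_hom : forall M N f, ishom M N f -> ishom (fobj M) (fobj N) (fmap f);
  fmap_id : forall M, fmap (1%:M : 'M[k]_(mdim M)) = 1%:M;
  fmap_comp : forall M N P (f : 'M[k]_(mdim N, mdim M)) (g : 'M[k]_(mdim P, mdim N)),
      ishom M N f -> ishom N P g -> fmap (g *m f) = fmap g *m fmap f;
  fmap_lin : forall M N (c : k) (f g : 'M[k]_(mdim N, mdim M)),
      ishom M N f -> ishom M N g -> fmap (c *: f + g) = c *: fmap f + fmap g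
}.

Definition natural (F G : endofunctor)
    (eta : forall M, 'M[k]_(mdim (fobj G M), mdim (fobj F M))) : Prop :=
  (forall M, ishom (fobj F M) (fobj G M) (eta M)) /\
  (forall M N (f : 'M[k]_(mdim N, mdim M)), ishom M N f ->
      eta N *m fmap F f = fmap G f *m eta M).

Definition fiso (F G : endofunctor) : Prop :=
  exists eta : forall M, 'M[k]_(mdim (fobj G M), mdim (fobj F M)),
    natural eta /\
    forall M, exists inv : 'M[k]_(mdim (fobj F M), mdim (fobj G M)),
      inv *m eta M = 1%:M /\ eta M *m inv = 1%:M.

Program Definition fid : endofunctor :=
  @EndoFunctor (fun M => M) (fun M N f => f) _ _ _ _.
Solve All Obligations with done.

Program Definition fcomp (F G : endofunctor) : endofunctor :=
  @EndoFunctor (fun M => fobj F (fobj G M))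
               (fun M N f => fmap F (fmap G f)) _ _ _ _.
Next Obligation. move=> F G M N f Hf; do 2 apply: fmap_hom => //. Qed.
Next Obligation. by move=> * /=; rewrite !fmap_id. Qed.
Next Obligation.
move=> F G M N P f g Hf Hg /=.
by rewrite fmap_comp // fmap_comp //; apply: fmap_hom.
Qed.
Next Obligation.
move=> F G M N c f g Hf Hg /=.
by rewrite fmap_lin // fmap_lin //; apply: fmap_hom.
Qed.

Program Definition fsum (F G : endofunctor) : endofunctor :=
  @EndoFunctor (fun M => msum (fobj F M) (fobj G M))
               (fun M N f => block_mx (fmap F f) 0 0 (fmap G f)) _ _ _ _.
Next Obligation.
move=> F G M N f Hf a /=.
rewrite !mulmx_block !mulmx0 !mul0mx !addr0 !add0r.
by rewrite (@fmap_hom F _ _ _ Hf) (@fmap_hom G _ _ _ Hf).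
Qed.
Next Obligation. by move=> * /=; rewrite !fmap_id -scalar_mx_block. Qed.
Next Obligation.
move=> F G M N P f g Hf Hg /=.
by rewrite mulmx_block !mulmx0 !mul0mx !addr0 !add0r !fmap_comp.
Qed.
Next Obligation.
move=> F G M N c f g Hf Hg /=.
by rewrite scale_block_mx add_block_mx !scaler0 !addr0 !fmap_lin.
Qed.

Program Definition fzero : endofunctor :=
  @EndoFunctor (fun _ => mzero) (fun _ _ _ => 0) _ _ _ _.
Solve All Obligations with by move=> *; rewrite ?[LHS]flatmx0 ?[RHS]flatmx0 => //.

Definition fpow (F : endofunctor) (j : nat) : endofunctor := iter j (fcomp F) fid.
Definition fmuln (H : endofunctor) (c : nat) : endofunctor := iter c (fsum H) fzero.

Definition fpoly (p : {poly nat}) (F : endofunctor) : endofunctor :=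
  foldr (fun j acc => fsum (fmuln (fpow F j) (p`_j)%R) acc) fzero (iota 0 (size p)).

Definition mxpoly_nat (p : {poly nat}) (X : 'M[nat]_n) : 'M[nat]_n :=
  \sum_(j < size p) (X ^+ j) *+ (p`_j)%R.

(* Composition multiplicity [M : L_i] = dim e_i M = rank of the action of  *)
(* the idempotent e_i, and the matrix M_F of the induced endomorphism of   *)
(* the Grothendieck group in the basis [L_1],...,[L_n]: column j is        *)
(* [F L_j] = \sum_i [F L_j : L_i] [L_i].                                   *)
Definition mult (M : amod) (i : 'I_n) : nat := \rank (act M (aidem i)).

Definition MF (F : endofunctor) : 'M[nat]_n :=
  \matrix_(i, j) mult (fobj F (simple j)) i.

Definition selfadjoint (F : endofunctor) : Prop :=
  exists (eta : forall M, 'M[k]_(mdim (fobj F (fobj F M)), mdim M))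
         (eps : forall M, 'M[k]_(mdim M, mdim (fobj F (fobj F M)))),
    natural (F := fid) (G := fcomp F F) eta /\
    natural (F := fcomp F F) (G := fid) eps /\
    (forall M, eps (fobj F M) *m fmap F (eta M) = 1%:M) /\
    (forall M, fmap F (eps M) *m eta (fobj F M) = 1%:M).

End Alg.

Definition symmetric_mx (n : nat) (X : 'M[nat]_n) : Prop := X^T = X.

(* Main.v *)
Require Import Defs.
From mathcomp Require Import all_boot all_order all_algebra.
Set Implicit Arguments. Unset Strict Implicit. Unset Printing Implicit Defensive.
Import GRing.Theory.
Local Open Scope ring_scope.

Section Main.
Variables (k : fieldType) (n : nat).

Local Notation amod := (amod k n).
Local Notation alg := (alg k n).
Local Notation homm M N f := (@ishom k n M N f).
Local Notation Fm F M N f := (@fmap k n F M N f).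

Definition Em (M : amod) (j : 'I_n) := act M (aidem k j).
Definition azero : alg := ascale 0 (aone k n).

Lemma act0 (M : amod) : act M azero = 0.
Proof. by rewrite /azero actZ scale0r. Qed.

Lemma amul_idem (a : alg) j : amul (aidem k j) a = ascale (a j) (aidem k j).
Proof. by apply/ffunP=> x; rewrite !ffunE; case: eqP => [->|_]; rewrite ?mulr1 ?mul1r ?mul0r ?mulr0. Qed.

Lemma amulC (a b : alg) : amul a b = amul b a.
Proof. by apply/ffunP=> x; rewrite !ffunE mulrC. Qed.

Lemma Em_act (M : amod) j a : Em M j *m act M a = a j *: Em M j.
Proof. by rewrite /Em -actM amul_idem actZ. Qed.

Lemma act_Em (M : amod) j a : act M a *m Em M j = a j *: Em M j.
Proof. by rewrite /Em -actM amulC amul_idem actZ. Qed.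

Lemma Em_mul (M : amod) j l : Em M j *m Em M l = (j == l)%:R *: Em M j.
Proof. by rewrite {2}/Em Em_act ffunE eq_sym. Qed.

Lemma Em_idem (M : amod) j : Em M j *m Em M j = Em M j.
Proof. by rewrite Em_mul eqxx scale1r. Qed.

Lemma Em_orth (M : amod) j l : j != l -> Em M j *m Em M l = 0.
Proof. by move=> /negbTE h; rewrite Em_mul h scale0r. Qed.

Lemma act_big (M : amod) (I : Type) (s : seq I) (F : I -> alg) :
  act M (\big[@aadd k n/azero]_(i <- s) F i) = \sum_(i <- s) act M (F i).
Proof.
elim: s => [|x s IH]; first by rewrite !big_nil act0.
by rewrite !big_cons actD IH.
Qed.

Lemma big_alg_eval (I : Type) (s : seq I) (F : I -> alg) x :
  (\big[@aadd k n/azero]_(i <- s) F i) x = \sum_(i <- s) F i x.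
Proof.
elim: s => [|y s IH]; first by rewrite !big_nil /azero !ffunE mul0r.
by rewrite !big_cons ffunE IH.
Qed.

Lemma Em_sum (M : amod) : \sum_j Em M j = 1%:M.
Proof.
rewrite -(act1 M) -act_big; congr (act M _).
apply/ffunP=> x; rewrite big_alg_eval ffunE (bigD1 x) //= ffunE eqxx big1 ?addr0 //.
by move=> i /negbTE h; rewrite ffunE eq_sym h.
Qed.

Lemma act_sumE (M : amod) a : act M a = \sum_j a j *: Em M j.
Proof.
by rewrite -[act M a]mulmx1 -Em_sum mulmx_sumr; apply: eq_bigr => j _; rewrite act_Em.
Qed.

Lemma homP (M N : amod) (f : 'M[k]_(mdim N, mdim M)) :
  homm M N f <-> forall j, f *m Em M j = Em N j *m f.
Proof.
split=> [h j|h a]; first exact: h.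
rewrite !act_sumE mulmx_sumr mulmx_suml; apply: eq_bigr => j _.
by rewrite -scalemxAr -scalemxAl h.
Qed.

Lemma hom_comp (M N P : amod) f g : homm M N f -> homm N P g -> homm M P (g *m f).
Proof. by move=> hf hg a; rewrite -mulmxA hf !mulmxA hg. Qed.

Lemma hom1 (M : amod) : homm M M 1%:M.
Proof. by move=> a; rewrite mul1mx mulmx1. Qed.

Lemma hom0 (M N : amod) : homm M N 0.
Proof. by move=> a; rewrite mul0mx mulmx0. Qed.

Lemma homD (M N : amod) f g : homm M N f -> homm M N g -> homm M N (f + g).
Proof. by move=> hf hg a; rewrite mulmxDl mulmxDr hf hg. Qed.

Lemma homZ (M N : amod) c f : homm M N f -> homm M N (c *: f).
Proof. by move=> hf a; rewrite -scalemxAl -scalemxAr hf. Qed.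

Lemma hom_sum (M N : amod) (I : Type) (s : seq I) (P : pred I) (h : I -> 'M_(mdim N, mdim M)) :
  (forall i, P i -> homm M N (h i)) -> homm M N (\sum_(i <- s | P i) h i).
Proof.
move=> H; elim: s => [|x s IH]; first by rewrite big_nil; apply: hom0.
rewrite big_cons; case: ifP => // Px; apply: homD => //; exact: H.
Qed.

Lemma fmap0 (F : endofunctor k n) (M N : amod) : Fm F M N 0 = 0.
Proof.
have := @fmap_lin _ _ F M N 1 0 0 (hom0 _ _) (hom0 _ _).
rewrite scale1r addr0 => h; apply: (@addrI _ (Fm F M N 0)); by rewrite addr0 {3}h scale1r.
Qed.

Lemma fmapZ (F : endofunctor k n) (M N : amod) c f : homm M N f ->
  Fm F M N (c *: f) = c *: Fm F M N f.
Proof.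
move=> hf; have := @fmap_lin _ _ F M N c f 0 hf (hom0 _ _).
by rewrite !addr0 fmap0 addr0.
Qed.

Lemma fmapD (F : endofunctor k n) (M N : amod) f g : homm M N f -> homm M N g ->
  Fm F M N (f + g) = Fm F M N f + Fm F M N g.
Proof. by move=> hf hg; have := @fmap_lin _ _ F M N 1 f g hf hg; rewrite !scale1r. Qed.

Lemma fmap_sum (F : endofunctor k n) (M N : amod) (I : Type) (s : seq I) (P : pred I)
   (h : I -> 'M_(mdim N, mdim M)) :
  (forall i, P i -> homm M N (h i)) ->
  Fm F M N (\sum_(i <- s | P i) h i) = \sum_(i <- s | P i) Fm F M N (h i).
Proof.
move=> H; elim: s => [|x s IH]; first by rewrite !big_nil fmap0.
rewrite !big_cons; case: ifP => // Px; rewrite fmapD ?IH //; first exact: H.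
exact: hom_sum.
Qed.

Lemma fmap_hom' (F : endofunctor k n) (M N : amod) f : homm M N f ->
  homm (fobj F M) (fobj F N) (Fm F M N f).
Proof. exact: fmap_hom. Qed.

Lemma fmapM (F : endofunctor k n) (M N P : amod) f g : homm M N f -> homm N P g ->
  Fm F M P (g *m f) = Fm F N P g *m Fm F M N f.
Proof. exact: fmap_comp. Qed.

Lemma fmap1 (F : endofunctor k n) (M : amod) : Fm F M M 1%:M = 1%:M.
Proof. exact: fmap_id. Qed.

Fact RQ_key : unit. Proof. by []. Qed.
Definition Rm (M : amod) j : 'M[k]_(mdim M, mult M j) := locked_with RQ_key (col_base (Em M j)).
Definition Qm (M : amod) j : 'M[k]_(mult M j, mdim M) := locked_with RQ_key (row_base (Em M j)).

Lemma RQ (M : amod) j : Rm M j *m Qm M j = Em M j.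
Proof. rewrite /Rm /Qm !unlock; exact: mulmx_base. Qed.

Lemma QR (M : amod) j : Qm M j *m Rm M j = 1%:M.
Proof.
have h1 : Rm M j *m (Qm M j *m Rm M j *m Qm M j) = Rm M j *m Qm M j.
  by rewrite !mulmxA !RQ -mulmxA RQ Em_idem.
have eQ : Qm M j = row_base (Em M j) by rewrite /Qm unlock.
have eR : Rm M j = col_base (Em M j) by rewrite /Rm unlock.
have h2 : Qm M j *m Rm M j *m Qm M j = Qm M j.
  apply: (row_full_inj (col_base_full (Em M j))); by rewrite -eR.
apply: (row_free_inj (row_base_free (Em M j))); by rewrite /= -eQ mul1mx.
Qed.

Lemma QE (M : amod) j : Qm M j *m Em M j = Qm M j.
Proof. by rewrite -RQ mulmxA QR mul1mx. Qed.

Lemma ER (M : amod) j : Em M j *m Rm M j = Rm M j.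
Proof. by rewrite -RQ -mulmxA QR mulmx1. Qed.

Lemma Q_act (M : amod) j a : Qm M j *m act M a = a j *: Qm M j.
Proof. by rewrite -QE -mulmxA Em_act -scalemxAr QE. Qed.

Lemma act_R (M : amod) j a : act M a *m Rm M j = a j *: Rm M j.
Proof. by rewrite -ER mulmxA act_Em -scalemxAl ER. Qed.

Lemma QR0 (M : amod) j l : j != l -> Qm M j *m Rm M l = 0.
Proof.
by move=> h; rewrite -QE -ER mulmxA -(mulmxA _ (Em M j)) Em_orth // mulmx0 mul0mx.
Qed.

Lemma sumRQ (M : amod) : \sum_j Rm M j *m Qm M j = 1%:M.
Proof. by rewrite -Em_sum; apply: eq_bigr => j _; rewrite RQ. Qed.

Lemma smod_D j r (a b : alg) : ((aadd a b) j)%:M = (a j)%:M + (b j)%:M :> 'M[k]_r.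
Proof. by rewrite ffunE raddfD. Qed.
Lemma smod_Z j r c (a : alg) : ((ascale c a) j)%:M = c *: (a j)%:M :> 'M[k]_r.
Proof. by rewrite ffunE scale_scalar_mx. Qed.
Lemma smod_1 j r : ((aone k n) j)%:M = 1%:M :> 'M[k]_r.
Proof. by rewrite ffunE. Qed.
Lemma smod_M j r (a b : alg) : ((amul a b) j)%:M = (a j)%:M *m (b j)%:M :> 'M[k]_r.
Proof. by rewrite ffunE scalar_mxM. Qed.

Definition smod j r : amod :=
  @AMod k n r (fun a => (a j)%:M) (smod_D j r) (smod_Z j r) (smod_1 j r) (smod_M j r).

Lemma Em_smod j r l : Em (smod j r) l = ((l == j)%:R)%:M.
Proof. by rewrite /Em /= ffunE eq_sym. Qed.

Lemma Em_smod_eq j r : Em (smod j r) j = 1%:M.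
Proof. by rewrite Em_smod eqxx. Qed.

Lemma Em_simple j l : Em (simple k j) l = ((l == j)%:R)%:M.
Proof. by rewrite /Em /= ffunE eq_sym. Qed.

Lemma hom_smod j r r' (f : 'M[k]_(r', r)) : homm (smod j r) (smod j r') f.
Proof. by move=> a /=; rewrite scalar_mxC. Qed.

Lemma hom_R (M : amod) j : homm (smod j (mult M j)) M (Rm M j).
Proof. by move=> a /=; rewrite act_R mul_mx_scalar. Qed.

Lemma hom_Q (M : amod) j : homm M (smod j (mult M j)) (Qm M j).
Proof. by move=> a /=; rewrite Q_act mul_scalar_mx. Qed.

Lemma hom_simple_smod j r (f : 'M[k]_(r, 1)) : homm (simple k j) (smod j r) f.
Proof. by move=> a /=; rewrite mul_mx_scalar mul_scalar_mx. Qed.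

Lemma hom_smod_simple j r (f : 'M[k]_(1, r)) : homm (smod j r) (simple k j) f.
Proof. by move=> a /=; rewrite mul_mx_scalar mul_scalar_mx. Qed.

Lemma hom_simple_neq j l (c : 'M[k]_1) : homm (simple k j) (simple k l) c -> j != l -> c = 0.
Proof.
move=> h jl; have := h (aidem k j); rewrite /= !ffunE eqxx eq_sym (negbTE jl).
by rewrite mul_mx_scalar mul_scalar_mx scale1r scale0r.
Qed.

Lemma mult_smod (j : 'I_n) r l : mult (smod j r) l = if l == j then r else 0%N.
Proof.
rewrite /mult -/(Em _ _) Em_smod; case: eqP => _; first by rewrite mxrank1.
by rewrite raddf0 mxrank0.
Qed.

Lemma mult_simple (j l : 'I_n) : mult (simple k j) l = if l == j then 1%N else 0%N.
Proof.
rewrite /mult -/(Em _ _) Em_simple; case: eqP => _.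
  exact: (mxrank1 k 1).
by rewrite raddf0 mxrank0.
Qed.
Lemma rank_orth2 D (A B : 'M[k]_D) : A *m A = A -> B *m B = B -> A *m B = 0 -> B *m A = 0 ->
  \rank (A + B)%R = (\rank A + \rank B)%N.
Proof.
move=> hA hB hAB hBA.
have e1 : A + B = row_mx 1%:M 1%:M *m col_mx A B by rewrite mul_row_col !mul1mx.
have e2 : col_mx A B = col_mx A B *m (A + B) by rewrite mul_col_mx !mulmxDr hA hB hAB hBA addr0 add0r.
have e3 : block_mx A 0 0 B = col_mx A B *m row_mx A B.
  by rewrite mul_col_row hA hB hAB hBA.
have e4 : col_mx A B = block_mx A 0 0 B *m col_mx 1%:M 1%:M.
  by rewrite mul_block_col !mulmx1 addr0 add0r.
rewrite -(rank_diag_block_mx A B); apply/eqP; rewrite eqn_leq; apply/andP; split.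
  apply: (leq_trans (n := \rank (col_mx A B))).
    have hh := mxrankM_maxr (row_mx 1%:M 1%:M) (col_mx A B); rewrite -e1 in hh; exact: hh.
  have hh := mxrankM_maxl (block_mx A 0 0 B) (col_mx 1%:M 1%:M); rewrite -e4 in hh; exact: hh.
apply: (leq_trans (n := \rank (col_mx A B))).
  have hh := mxrankM_maxl (col_mx A B) (row_mx A B); rewrite -e3 in hh; exact: hh.
have hh := mxrankM_maxr (col_mx A B) (A + B); rewrite -e2 in hh; exact: hh.
Qed.

Lemma rank_orth_sum D (I : eqType) (s : seq I) (P : I -> 'M[k]_D) :
  uniq s -> (forall i, P i *m P i = P i) ->
  (forall i j, i != j -> P i *m P j = 0) ->
  \rank (\sum_(i <- s) P i)%R = (\sum_(i <- s) \rank (P i))%N.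
Proof.
move=> + hid hor; elim: s => [|x s IH]; first by rewrite !big_nil mxrank0.
rewrite cons_uniq => /andP [xs us].
have l1 : forall y, y \notin s -> P y *m (\sum_(i <- s) P i) = 0.
  move=> y ys; rewrite mulmx_sumr big_seq big1 // => i iS; apply: hor.
  by apply: contraNneq ys => ->.
have l2 : forall y, y \notin s -> (\sum_(i <- s) P i) *m P y = 0.
  move=> y ys; rewrite mulmx_suml big_seq big1 // => i iS; apply: hor.
  by apply: contraNneq ys => <-.
have l3 : (\sum_(i <- s) P i) *m (\sum_(i <- s) P i) = \sum_(i <- s) P i.
  rewrite mulmx_suml big_seq [RHS]big_seq; apply: eq_bigr => i iS.
  rewrite mulmx_sumr (bigD1_seq i) //= hid big1 ?addr0 // => j ji.
  by apply: hor; rewrite eq_sym.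
by rewrite !big_cons rank_orth2 ?IH ?hid ?l1 ?l2.
Qed.

Lemma rank_UZV a b (U : 'M[k]_(a, b)) (Z : 'M[k]_b) (V : 'M[k]_(b, a)) :
  V *m U = 1%:M -> \rank (U *m Z *m V) = \rank Z.
Proof.
move=> h; apply/eqP; rewrite eqn_leq; apply/andP; split.
  exact: leq_trans (mxrankM_maxl (U *m Z) V) (mxrankM_maxr U Z).
have e : Z = V *m (U *m Z *m V) *m U by rewrite !mulmxA h mul1mx -mulmxA h mulmx1.
rewrite {1}e.
exact: leq_trans (mxrankM_maxl _ U) (mxrankM_maxr V _).
Qed.

Lemma hom_Em (M N : amod) f : homm M N f -> forall i, Em N i *m f = f *m Em M i.
Proof. by move=> h i; rewrite h. Qed.

Lemma mult_gen (F : endofunctor k n) (M : amod) (I : finType) (N : I -> amod)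
  (u : forall t, 'M[k]_(mdim M, mdim (N t))) (v : forall t, 'M[k]_(mdim (N t), mdim M)) :
  (forall t, homm (N t) M (u t)) -> (forall t, homm M (N t) (v t)) ->
  \sum_t u t *m v t = 1%:M -> (forall t, v t *m u t = 1%:M) ->
  (forall t t', t != t' -> v t *m u t' = 0) ->
  forall i, mult (fobj F M) i = (\sum_t mult (fobj F (N t)) i)%N.
Proof.
move=> hu hv hs h1 h0 i.
pose P t := Fm F (N t) M (u t) *m Em (fobj F (N t)) i *m Fm F M (N t) (v t).
have eE : Em (fobj F M) i = \sum_t P t.
  rewrite -[LHS]mulmx1 -(fmap1 F M) -hs fmap_sum; last by move=> t _; apply: hom_comp.
  rewrite mulmx_sumr; apply: eq_bigr => t _.
  rewrite (fmapM _ (hv t) (hu t)) mulmxA; congr (_ *m _).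
  by rewrite hom_Em //; apply: fmap_hom'.
have FvFu : forall t t', Fm F M (N t) (v t) *m Fm F (N t') M (u t') =
    Fm F (N t') (N t) (v t *m u t').
  by move=> t t'; rewrite fmapM.
rewrite /mult -/(Em _ _) eE rank_orth_sum ?index_enum_uniq //.
- apply: eq_bigr => t _; rewrite /P rank_UZV // FvFu h1 fmap1 //.
- move=> t; rewrite /P !mulmxA -(mulmxA _ _ (Fm F (N t) M (u t))) FvFu h1 fmap1 mulmx1.
  by rewrite -(mulmxA (Fm F (N t) M (u t))) Em_idem.
- move=> t t' tt; rewrite /P !mulmxA -(mulmxA _ _ (Fm F (N t') M (u t'))) FvFu h0 // fmap0.
  by rewrite mulmx0 !mul0mx.
Qed.
Lemma sum_delta_id r : \sum_(s < r) delta_mx s (0 : 'I_1) *m delta_mx (0 : 'I_1) s = 1%:M :> 'M[k]_r.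
Proof.
apply/matrixP => i j; rewrite summxE !mxE (bigD1 i) //= mul_delta_mx !mxE eqxx big1 ?addr0.
  by rewrite eq_sym.
by move=> s si; rewrite mul_delta_mx mxE eq_sym (negbTE si).
Qed.

Lemma delta11 : delta_mx 0 0 = 1%:M :> 'M[k]_1.
Proof. by apply/matrixP => i j; rewrite !mxE !ord1. Qed.

Lemma mult_smodF (F : endofunctor k n) j r i :
  mult (fobj F (smod j r)) i = (r * mult (fobj F (simple k j)) i)%N.
Proof.
rewrite (@mult_gen F (smod j r) 'I_r (fun _ => simple k j)
  (fun s => delta_mx s (0 : 'I_1)) (fun s => delta_mx (0 : 'I_1) s)).
- by rewrite big_const_ord iter_addn_0 mulnC.
- by move=> s; apply: hom_simple_smod.
- by move=> s; apply: hom_smod_simple.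
- exact: sum_delta_id.
- by move=> s; rewrite mul_delta_mx delta11.
- by move=> s s' ss; rewrite mul_delta_mx_0.
Qed.

Lemma mult_F (F : endofunctor k n) (M : amod) i :
  mult (fobj F M) i = (\sum_j mult M j * mult (fobj F (simple k j)) i)%N.
Proof.
rewrite (@mult_gen F M 'I_n (fun j => smod j (mult M j)) (Rm M) (Qm M)).
- by apply: eq_bigr => j _; rewrite mult_smodF.
- exact: hom_R.
- exact: hom_Q.
- exact: sumRQ.
- exact: QR.
- exact: QR0.
Qed.

Lemma MFE (F : endofunctor k n) i j : MF F i j = mult (fobj F (simple k j)) i.
Proof. by rewrite mxE. Qed.

Lemma MF_fcomp (F G : endofunctor k n) : MF (fcomp F G) = MF F *m MF G.
Proof.
apply/matrixP => i j; rewrite !mxE /= mult_F; apply: eq_bigr => l _.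
by rewrite !mxE mulnC.
Qed.

Lemma MF_fid : MF (fid k n) = 1%:M.
Proof.
apply/matrixP => i j; rewrite !mxE /= mult_simple.
by case: eqP.
Qed.

Lemma mult_msum (M N : amod) i : mult (msum M N) i = (mult M i + mult N i)%N.
Proof. by rewrite /mult /= rank_diag_block_mx. Qed.

Lemma MF_fsum (F G : endofunctor k n) : MF (fsum F G) = MF F + MF G.
Proof. by apply/matrixP => i j; rewrite !mxE /= mult_msum. Qed.

Lemma MF_fzero : MF (fzero k n) = 0.
Proof. by apply/matrixP => i j; rewrite !mxE /mult /= mxrank0. Qed.

Lemma MF_fmuln (H : endofunctor k n) c : MF (fmuln H c) = MF H *+ c.
Proof.
elim: c => [|c IH]; first by rewrite mulr0n MF_fzero.
by rewrite /fmuln iterS -/(fmuln H c) MF_fsum IH mulrS.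
Qed.

Lemma MF_fpow (F : endofunctor k n) j : MF (fpow F j) = MF F ^+ j.
Proof.
elim: j => [|j IH]; first by rewrite expr0 MF_fid.
by rewrite /fpow iterS -/(fpow F j) MF_fcomp IH exprS.
Qed.

Lemma MF_foldr (s : seq nat) (G : nat -> endofunctor k n) :
  MF (foldr (fun j acc => fsum (G j) acc) (fzero k n) s) = \sum_(j <- s) MF (G j).
Proof.
elim: s => [|x s IH]; first by rewrite big_nil MF_fzero.
by rewrite big_cons /= MF_fsum IH.
Qed.

Lemma MF_fpoly (p : {poly nat}) (F : endofunctor k n) : MF (fpoly p F) = mxpoly_nat p (MF F).
Proof.
rewrite /fpoly MF_foldr /mxpoly_nat.
have -> : iota 0 (size p) = index_iota 0 (size p) by rewrite /index_iota subn0.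
rewrite big_mkord.
by apply: eq_bigr => j _; rewrite MF_fmuln MF_fpow.
Qed.
Lemma hom_inv (M N : amod) (f : 'M[k]_(mdim N, mdim M)) (g : 'M[k]_(mdim M, mdim N)) :
  homm M N f -> g *m f = 1%:M -> f *m g = 1%:M -> homm N M g.
Proof.
move=> hf gf fg a.
by rewrite -[g *m _]mulmx1 -fg !mulmxA -(mulmxA g) -hf mulmxA gf mul1mx.
Qed.

Lemma mult_iso (M N : amod) (f : 'M[k]_(mdim N, mdim M)) (g : 'M[k]_(mdim M, mdim N)) :
  homm M N f -> g *m f = 1%:M -> f *m g = 1%:M -> forall i, mult M i = mult N i.
Proof.
move=> hf gf fg i; rewrite /mult -!/(Em _ _).
have -> : Em M i = g *m Em N i *m f by rewrite -mulmxA (hom_Em hf) mulmxA gf mul1mx.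
exact: rank_UZV.
Qed.

Lemma fiso_MF (F G : endofunctor k n) : fiso F G -> MF F = MF G.
Proof.
move=> [eta [[heta _] hinv]]; apply/matrixP => i j; rewrite !mxE.
have [g [h1 h2]] := hinv (simple k j).
exact: (mult_iso (heta _) h1 h2).
Qed.

Lemma sum_orth_mul a b c (I : finType) (A : I -> 'M[k]_(a, b)) (B : I -> 'M[k]_(b, c)) :
  (forall j l, j != l -> A j *m B l = 0) ->
  (\sum_j A j) *m (\sum_l B l) = \sum_j A j *m B j.
Proof.
move=> h; rewrite mulmx_suml; apply: eq_bigr => j _.
rewrite mulmx_sumr (bigD1 j) //= big1 ?addr0 // => l lj.
by apply: h; rewrite eq_sym.
Qed.

Definition isomx (M N : amod) : 'M[k]_(mdim N, mdim M) :=
  \sum_j Rm N j *m (pid_mx (mult M j) : 'M_(mult N j, mult M j)) *m Qm M j.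

Lemma hom_isomx (M N : amod) : homm M N (isomx M N).
Proof.
apply: hom_sum => j _; apply: hom_comp (hom_Q M j) _.
apply: hom_comp (hom_R N j); exact: hom_smod.
Qed.

Lemma isomxK (M N : amod) : (forall j, mult M j = mult N j) ->
  isomx N M *m isomx M N = 1%:M.
Proof.
move=> e; rewrite /isomx sum_orth_mul.
  rewrite -(sumRQ M); apply: eq_bigr => j _.
  rewrite !mulmxA -(mulmxA _ (Qm N j)) QR mulmx1 -(mulmxA (Rm M j)) mul_pid_mx.
  by rewrite -e !minnn pid_mx_1 mulmx1.
by move=> j l jl; rewrite !mulmxA -(mulmxA _ (Qm N j)) QR0 // mulmx0 !mul0mx.
Qed.

Lemma fmapQR (F : endofunctor k n) (M : amod) j :
  Fm F M (smod j (mult M j)) (Qm M j) *m Fm F (smod j (mult M j)) M (Rm M j) = 1%:M.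
Proof. by rewrite -fmapM ?QR ?fmap1 //; [apply: hom_R | apply: hom_Q]. Qed.

Lemma sum_iso (F G : endofunctor k n) (M : amod) (I : finType) (N : I -> amod)
  (u : forall t, 'M[k]_(mdim M, mdim (N t))) (v : forall t, 'M[k]_(mdim (N t), mdim M))
  (al : forall t, 'M[k]_(mdim (fobj G (N t)), mdim (fobj F (N t))))
  (be : forall t, 'M[k]_(mdim (fobj F (N t)), mdim (fobj G (N t)))) :
  (forall t, homm (N t) M (u t)) -> (forall t, homm M (N t) (v t)) ->
  \sum_t u t *m v t = 1%:M -> (forall t, v t *m u t = 1%:M) ->
  (forall t t', t != t' -> v t *m u t' = 0) ->
  (forall t, be t *m al t = 1%:M) ->
  (\sum_t Fm F (N t) M (u t) *m be t *m Fm G M (N t) (v t)) *m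
  (\sum_t Fm G (N t) M (u t) *m al t *m Fm F M (N t) (v t)) = 1%:M.
Proof.
move=> hu hv hs h1 h0 hba; rewrite sum_orth_mul.
  rewrite -(fmap1 F M) -hs fmap_sum; last by move=> t _; apply: hom_comp.
  apply: eq_bigr => t _.
  rewrite !mulmxA -(mulmxA _ (Fm G M (N t) (v t))) -fmapM // h1 fmap1 mulmx1.
  by rewrite -(mulmxA _ (be t)) hba mulmx1 fmapM.
move=> t t' tt.
by rewrite !mulmxA -(mulmxA _ (Fm G M (N t) (v t))) -fmapM // h0 // fmap0 mulmx0 !mul0mx.
Qed.
Lemma rowc r r' (c : 'M[k]_(r', r)) (s' : 'I_r') :
  delta_mx (0 : 'I_1) s' *m c = \sum_(s < r) c s' s *: delta_mx (0 : 'I_1) s.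
Proof.
rewrite -rowE; apply/matrixP => i j; rewrite summxE !mxE (bigD1 j) //= !mxE eqxx.
rewrite big1 ?addr0; first by rewrite !ord1 eqxx mulr1.
by move=> s sj; rewrite !mxE [j == s]eq_sym (negbTE sj) andbF mulr0.
Qed.

Lemma colc r r' (c : 'M[k]_(r', r)) (s : 'I_r) :
  c *m delta_mx s (0 : 'I_1) = \sum_(s' < r') c s' s *: delta_mx s' (0 : 'I_1).
Proof.
rewrite -colE; apply/matrixP => i j; rewrite summxE !mxE (bigD1 i) //= !mxE eqxx.
rewrite big1 ?addr0; first by rewrite !ord1 eqxx mulr1.
by move=> s' si; rewrite !mxE eq_sym (negbTE si) mulr0.
Qed.

Section Inj.
Variables F G : endofunctor k n.

Definition al j := isomx (fobj F (simple k j)) (fobj G (simple k j)).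

Definition als j r : 'M[k]_(mdim (fobj G (smod j r)), mdim (fobj F (smod j r))) :=
  \sum_(s < r) Fm G (simple k j) (smod j r) (delta_mx s 0) *m al j *m
     Fm F (smod j r) (simple k j) (delta_mx 0 s).

Definition etaFG (M : amod) : 'M[k]_(mdim (fobj G M), mdim (fobj F M)) :=
  \sum_j Fm G (smod j (mult M j)) M (Rm M j) *m als j (mult M j) *m
     Fm F M (smod j (mult M j)) (Qm M j).

Lemma hom_al j : homm (fobj F (simple k j)) (fobj G (simple k j)) (al j).
Proof. exact: hom_isomx. Qed.

Lemma hom_als j r : homm (fobj F (smod j r)) (fobj G (smod j r)) (als j r).
Proof.
apply: hom_sum => s _; apply: hom_comp; first by apply: fmap_hom'; apply: hom_smod_simple.
apply: hom_comp (hom_al j) _; apply: fmap_hom'; exact: hom_simple_smod.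
Qed.

Lemma hom_etaFG M : homm (fobj F M) (fobj G M) (etaFG M).
Proof.
apply: hom_sum => j _; apply: hom_comp; first by apply: fmap_hom'; apply: hom_Q.
apply: hom_comp (hom_als _ _) _; apply: fmap_hom'; exact: hom_R.
Qed.

Lemma nat1 j r r' (c : 'M[k]_(r', r)) :
  als j r' *m Fm F (smod j r) (smod j r') c = Fm G (smod j r) (smod j r') c *m als j r.
Proof.
transitivity (\sum_(s' < r') \sum_(s < r) c s' s *:
   (Fm G (simple k j) (smod j r') (delta_mx s' 0) *m al j *m
     Fm F (smod j r) (simple k j) (delta_mx 0 s))).
  rewrite /als mulmx_suml; apply: eq_bigr => s' _.
  rewrite -mulmxA -fmapM; [|exact: hom_smod|exact: hom_smod_simple].
  rewrite rowc fmap_sum; last by move=> s _; apply: homZ; apply: hom_smod_simple.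
  rewrite mulmx_sumr; apply: eq_bigr => s _.
  by rewrite fmapZ ?scalemxAr //; apply: hom_smod_simple.
rewrite exchange_big /als mulmx_sumr; apply: eq_bigr => s _.
rewrite !mulmxA -fmapM; [|exact: hom_simple_smod|exact: hom_smod].
rewrite colc fmap_sum; last by move=> s' _; apply: homZ; apply: hom_simple_smod.
rewrite !mulmx_suml; apply: eq_bigr => s' _.
by rewrite fmapZ -?scalemxAl //; apply: hom_simple_smod.
Qed.

Lemma QfR (M N : amod) f j : homm M N f ->
  Qm N j *m f = (Qm N j *m f *m Rm M j) *m Qm M j.
Proof.
by move=> hf; rewrite -mulmxA RQ -{1}QE -mulmxA (hom_Em hf) mulmxA.
Qed.

Lemma fR (M N : amod) f j : homm M N f ->
  f *m Rm M j = Rm N j *m (Qm N j *m f *m Rm M j).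
Proof.
by move=> hf; rewrite !mulmxA RQ (hom_Em hf) -mulmxA ER.
Qed.

Lemma hom_QfR (M N : amod) f j : homm M N f ->
  homm (smod j (mult M j)) (smod j (mult N j)) (Qm N j *m f *m Rm M j).
Proof. by move=> _; apply: hom_smod. Qed.

Lemma nat2 (M N : amod) f : homm M N f ->
  etaFG N *m Fm F M N f = Fm G M N f *m etaFG M.
Proof.
move=> hf; rewrite /etaFG mulmx_suml mulmx_sumr; apply: eq_bigr => j _.
rewrite -mulmxA -fmapM //; last exact: hom_Q.
rewrite (QfR j hf) (@fmapM F M (smod j (mult M j))); [|exact: hom_Q|exact: hom_QfR].
rewrite !mulmxA -(mulmxA _ (als _ _)) nat1 mulmxA -fmapM; [|exact: hom_QfR|exact: hom_R].
by rewrite -fR // (@fmapM G (smod j (mult M j)) M N) //; exact: hom_R.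
Qed.

End Inj.

Lemma als_inv (F G : endofunctor k n) : MF F = MF G ->
  forall j r, als G F j r *m als F G j r = 1%:M.
Proof.
move=> e j r; rewrite /als.
apply: (@sum_iso F G (smod j r) 'I_r (fun _ => simple k j) (fun s => delta_mx s 0) (fun s => delta_mx 0 s)
  (fun _ => al F G j) (fun _ => al G F j)).
- by move=> s; apply: hom_simple_smod.
- by move=> s; apply: hom_smod_simple.
- exact: sum_delta_id.
- by move=> s; rewrite mul_delta_mx delta11.
- by move=> s s' ss; rewrite mul_delta_mx_0.
- move=> _; apply: isomxK => i; by rewrite -!MFE e.
Qed.

Lemma eta_inv (F G : endofunctor k n) : MF F = MF G ->
  forall M, etaFG G F M *m etaFG F G M = 1%:M.
Proof.
move=> e M; rewrite /etaFG.
apply: (@sum_iso F G M 'I_n (fun j => smod j (mult M j)) (Rm M) (Qm M)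
  (fun j => als F G j (mult M j)) (fun j => als G F j (mult M j))).
- exact: hom_R.
- exact: hom_Q.
- exact: sumRQ.
- exact: QR.
- exact: QR0.
- by move=> j; apply: als_inv.
Qed.

Lemma MF_inj (F G : endofunctor k n) : MF F = MF G -> fiso F G.
Proof.
move=> e; exists (etaFG F G); split; first by split; [apply: hom_etaFG | move=> *; apply: nat2].
by move=> M; exists (etaFG G F M); split; apply: eta_inv.
Qed.
Lemma col_sum_delta m (v : 'M[k]_(m, 1)) : v = \sum_(s < m) v s 0 *: delta_mx s 0.
Proof. by rewrite {1}(matrix_sum_delta v); apply: eq_bigr => s _; rewrite big_ord1. Qed.

Lemma adj_le (F : endofunctor k n)
  (eta : forall M, 'M[k]_(mdim (fobj F (fobj F M)), mdim M))
  (eps : forall M, 'M[k]_(mdim M, mdim (fobj F (fobj F M)))) :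
  natural (F := fid k n) (G := fcomp F F) eta ->
  natural (F := fcomp F F) (G := fid k n) eps ->
  (forall M, eps (fobj F M) *m fmap F (eta M) = 1%:M) ->
  forall i j, (mult (fobj F (simple k j)) i <= mult (fobj F (simple k i)) j)%N.
Proof.
move=> [heta neta] [heps neps] tri i j.
set N := fobj F (simple k j); set N' := fobj F (simple k i).
set E := Em N i; set E' := Em N' j.
pose Phi (w : 'M[k]_(1, mdim N)) := Fm F N (simple k i) w *m eta (simple k j).
pose Psi (v : 'M[k]_(mdim N', 1)) := eps (simple k i) *m Fm F (simple k j) N' v.
have hPhi : forall w, homm N (simple k i) w -> homm (simple k j) N' (Phi w).
  move=> w hw; apply: hom_comp (heta _) _; exact: fmap_hom'.
have PsiPhi : forall w, homm N (simple k i) w -> Psi (Phi w) = w.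
  move=> w hw; rewrite /Psi /Phi fmapM ?heta //; last exact: fmap_hom'.
  have := neps _ _ w hw; rewrite /= mulmxA => ->.
  by rewrite -mulmxA tri mulmx1.
  exact: heta.
have Ehom : forall w, homm (simple k j) N' w -> E' *m w = w.
  move=> w hw; rewrite (hom_Em hw) Em_simple eqxx mulmx1 //.
have hw : forall r, homm N (simple k i) (delta_mx 0 r *m E).
  move=> r a /=; rewrite -mulmxA Em_act -scalemxAr mul_scalar_mx //.
have hd : forall s, homm (simple k j) N' (E' *m delta_mx s 0).
  move=> s a /=; rewrite mulmxA act_Em -scalemxAl mul_mx_scalar //.
pose Phim := \matrix_(r < mdim N, s < mdim N') (Phi (delta_mx 0 r *m E)) s 0.
pose Psim := \matrix_(s < mdim N', r < mdim N) (Psi (E' *m delta_mx s 0)) 0 r.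
have rowPhim : forall r, row r Phim = (Phi (delta_mx 0 r *m E))^T.
  by move=> r; apply/matrixP => a b; rewrite !mxE (ord1 a).
have rowPsim : forall s, row s Psim = Psi (E' *m delta_mx s 0).
  by move=> s; apply/matrixP => a b; rewrite !mxE (ord1 a).
have PsiE : forall v, homm (simple k j) N' v -> Psi v = v^T *m Psim.
  move=> v hv; rewrite mulmx_sum_row -{1}(Ehom _ hv) {1}(col_sum_delta v).
  rewrite mulmx_sumr /Psi fmap_sum; last first.
    by move=> s _; rewrite -scalemxAr; apply: homZ.
  rewrite mulmx_sumr; apply: eq_bigr => s _.
  by rewrite rowPsim -scalemxAr fmapZ // -scalemxAr mxE.
have eA : E = Phim *m Psim.
  apply/row_matrixP => r; rewrite row_mul rowPhim -PsiE; last exact: hPhi.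
  by rewrite PsiPhi // rowE.
have eB : Phim = Phim *m E'^T.
  apply/row_matrixP => r; rewrite row_mul rowPhim -trmx_mul Ehom //; exact: hPhi.
rewrite /mult -!/(Em _ _) -/E -/E' eA.
apply: leq_trans (mxrankM_maxl _ _) _; rewrite eB.
by apply: leq_trans (mxrankM_maxr _ _) _; rewrite mxrank_tr.
Qed.

Lemma selfadjoint_sym (F : endofunctor k n) : selfadjoint F -> symmetric_mx (MF F).
Proof.
move=> [eta [eps [h1 [h2 [h3 _]]]]]; apply/matrixP => i j; rewrite !mxE.
by apply/eqP; rewrite eqn_leq !(adj_le h1 h2 h3).
Qed.
Section Elt.
Variables (i j : 'I_n).

Definition elt_obj (M : amod) : amod := smod i (mult M j).
Definition elt_map (M N : amod) (f : 'M[k]_(mdim N, mdim M)) :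
  'M[k]_(mdim (elt_obj N), mdim (elt_obj M)) := Qm N j *m f *m Rm M j.

Lemma elt_hom M N f : homm M N f -> homm (elt_obj M) (elt_obj N) (elt_map f).
Proof. by move=> _; apply: hom_smod. Qed.

Lemma elt_id M : elt_map (1%:M : 'M[k]_(mdim M)) = 1%:M.
Proof. by rewrite /elt_map mulmx1 QR. Qed.

Lemma elt_comp M N P (f : 'M[k]_(mdim N, mdim M)) (g : 'M[k]_(mdim P, mdim N)) :
  homm M N f -> homm N P g -> elt_map (g *m f) = elt_map g *m elt_map f.
Proof.
move=> hf hg; rewrite /elt_map !mulmxA -(mulmxA _ (Rm N j)) RQ.
by rewrite -(mulmxA (Qm P j) g (Em N j)) -(hom_Em hg) mulmxA QE.
Qed.

Lemma elt_lin M N c (f g : 'M[k]_(mdim N, mdim M)) :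
  homm M N f -> homm M N g -> elt_map (c *: f + g) = c *: elt_map f + elt_map g.
Proof. by move=> _ _; rewrite /elt_map mulmxDr mulmxDl -scalemxAr -scalemxAl. Qed.

Definition Elt : endofunctor k n :=
  @EndoFunctor k n elt_obj elt_map elt_hom elt_id elt_comp elt_lin.

End Elt.

Lemma MF_Elt i j : MF (Elt i j) = delta_mx i j.
Proof.
apply/matrixP => a b; rewrite !mxE /= /elt_obj mult_smod mult_simple.
by rewrite [b == j]eq_sym; case: (a == i); case: (j == b).
Qed.
Lemma RQ_l (M : amod) j m (X : 'M[k]_(m, mdim M)) : X *m Rm M j *m Qm M j = X *m Em M j.
Proof. by rewrite -mulmxA RQ. Qed.
Lemma QR_l (M : amod) j m (X : 'M[k]_(m, mult M j)) : X *m Qm M j *m Rm M j = X.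
Proof. by rewrite -mulmxA QR mulmx1. Qed.
Lemma QE_l (M : amod) j m (X : 'M[k]_(m, mult M j)) : X *m Qm M j *m Em M j = X *m Qm M j.
Proof. by rewrite -mulmxA QE. Qed.
Lemma ER_l (M : amod) j m (X : 'M[k]_(m, mdim M)) : X *m Em M j *m Rm M j = X *m Rm M j.
Proof. by rewrite -mulmxA ER. Qed.
Lemma hom_l (M N : amod) f j m (X : 'M[k]_(m, mdim N)) : homm M N f ->
  X *m f *m Em M j = X *m Em N j *m f.
Proof. by move=> hf; rewrite -!mulmxA (hom_Em hf). Qed.

Definition adj (F G : endofunctor k n) : Prop :=
  exists (eta : forall M, 'M[k]_(mdim (fobj G (fobj F M)), mdim M))
         (eps : forall M, 'M[k]_(mdim M, mdim (fobj F (fobj G M)))),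
    natural (F := fid k n) (G := fcomp G F) eta /\
    natural (F := fcomp F G) (G := fid k n) eps /\
    (forall M, eps (fobj F M) *m fmap F (eta M) = 1%:M) /\
    (forall M, fmap G (eps M) *m eta (fobj G M) = 1%:M).

Lemma adj_selfadjoint (F : endofunctor k n) : adj F F <-> selfadjoint F.
Proof. by []. Qed.

Lemma adj_Elt i j : adj (Elt i j) (Elt j i).
Proof.
exists (fun M => Qm (fobj (Elt i j) M) i *m Qm M j).
exists (fun M => Rm M i *m Rm (fobj (Elt j i) M) j).
split; [split|split; [split|split]].
- by move=> M a /=; rewrite -mulmxA Q_act -scalemxAr mul_scalar_mx.
- move=> M N f hf /=; rewrite /elt_map !mulmxA (RQ_l (M := elt_obj i j M)) Em_smod_eq mulmx1 RQ_l.
  by rewrite (hom_l _ _ hf) QE_l.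
- by move=> M a /=; rewrite mulmxA act_R -scalemxAl mul_mx_scalar.
- move=> M N f hf /=; rewrite /elt_map !mulmxA (RQ_l (M := elt_obj j i N)) Em_smod_eq mulmx1.
  by rewrite RQ (hom_Em hf) ER_l.
- move=> M /=; rewrite /elt_map !mulmxA (RQ_l (M := elt_obj j i (elt_obj i j M))) Em_smod_eq mulmx1.
  by rewrite QR_l (RQ (elt_obj i j M)) Em_smod_eq.
- move=> M /=; rewrite /elt_map !mulmxA QR mul1mx (RQ_l (M := elt_obj i j (elt_obj j i M))).
  by rewrite Em_smod_eq mulmx1 (RQ (elt_obj j i M)) Em_smod_eq.
Qed.

Lemma adj_fzero : adj (fzero k n) (fzero k n).
Proof.
exists (fun M => 0); exists (fun M => 0).
split; [split|split; [split|split]].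
- by move=> M; apply: hom0.
- by move=> M N f hf /=; rewrite mul0mx mulmx0.
- by move=> M; apply: hom0.
- by move=> M N f hf /=; rewrite mul0mx mulmx0.
- by move=> M; rewrite [LHS]flatmx0 [RHS]flatmx0.
- by move=> M; rewrite [LHS]flatmx0 [RHS]flatmx0.
Qed.
Lemma hom_colmx (N M1 M2 : amod) f g : homm N M1 f -> homm N M2 g ->
  homm N (msum M1 M2) (col_mx f g).
Proof.
move=> hf hg a /=; rewrite mul_col_mx mul_block_col !mul0mx addr0 add0r.
by rewrite hf hg.
Qed.

Lemma hom_rowmx (M1 M2 N : amod) f g : homm M1 N f -> homm M2 N g ->
  homm (msum M1 M2) N (row_mx f g).
Proof.
move=> hf hg a /=; rewrite mul_mx_row mul_row_block !mulmx0 addr0 add0r.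
by rewrite hf hg.
Qed.

Definition il (M1 M2 : amod) : 'M[k]_(mdim (msum M1 M2), mdim M1) := col_mx 1%:M 0.
Definition ir (M1 M2 : amod) : 'M[k]_(mdim (msum M1 M2), mdim M2) := col_mx 0 1%:M.
Definition pl (M1 M2 : amod) : 'M[k]_(mdim M1, mdim (msum M1 M2)) := row_mx 1%:M 0.
Definition pr (M1 M2 : amod) : 'M[k]_(mdim M2, mdim (msum M1 M2)) := row_mx 0 1%:M.

Lemma hom_il M1 M2 : homm M1 (msum M1 M2) (il M1 M2).
Proof. by apply: hom_colmx; [apply: hom1|apply: hom0]. Qed.
Lemma hom_ir M1 M2 : homm M2 (msum M1 M2) (ir M1 M2).
Proof. by apply: hom_colmx; [apply: hom0|apply: hom1]. Qed.
Lemma hom_pl M1 M2 : homm (msum M1 M2) M1 (pl M1 M2).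
Proof. by apply: hom_rowmx; [apply: hom1|apply: hom0]. Qed.
Lemma hom_pr M1 M2 : homm (msum M1 M2) M2 (pr M1 M2).
Proof. by apply: hom_rowmx; [apply: hom0|apply: hom1]. Qed.

Lemma pl_col (M1 M2 : amod) m (A : 'M[k]_(mdim M1, m)) B : pl M1 M2 *m col_mx A B = A.
Proof. by rewrite /pl mul_row_col mul1mx mul0mx addr0. Qed.
Lemma pr_col (M1 M2 : amod) m A (B : 'M[k]_(mdim M2, m)) : pr M1 M2 *m col_mx A B = B.
Proof. by rewrite /pr mul_row_col mul1mx mul0mx add0r. Qed.
Lemma row_il (M1 M2 : amod) m (A : 'M[k]_(m, mdim M1)) B : row_mx A B *m il M1 M2 = A.
Proof. by rewrite /il mul_row_col mulmx1 mulmx0 addr0. Qed.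
Lemma row_ir (M1 M2 : amod) m A (B : 'M[k]_(m, mdim M2)) : row_mx A B *m ir M1 M2 = B.
Proof. by rewrite /ir mul_row_col mulmx1 mulmx0 add0r. Qed.
Lemma block_il (M1 M2 N1 N2 : amod) (A : 'M[k]_(mdim N1, mdim M1)) (B : 'M[k]_(mdim N2, mdim M2)) :
  block_mx A 0 0 B *m il M1 M2 = il N1 N2 *m A.
Proof. by rewrite /il mul_block_col mul_col_mx ?mulmx1 ?mul1mx ?mulmx0 ?mul0mx ?addr0 ?add0r. Qed.
Lemma block_ir (M1 M2 N1 N2 : amod) (A : 'M[k]_(mdim N1, mdim M1)) (B : 'M[k]_(mdim N2, mdim M2)) :
  block_mx A 0 0 B *m ir M1 M2 = ir N1 N2 *m B.
Proof. by rewrite /ir mul_block_col mul_col_mx ?mulmx1 ?mul1mx ?mulmx0 ?mul0mx ?addr0 ?add0r. Qed.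
Lemma pl_block (M1 M2 N1 N2 : amod) (A : 'M[k]_(mdim N1, mdim M1)) (B : 'M[k]_(mdim N2, mdim M2)) :
  pl N1 N2 *m block_mx A 0 0 B = A *m pl M1 M2.
Proof. by rewrite /pl mul_row_block mul_mx_row ?mulmx1 ?mul1mx ?mulmx0 ?mul0mx ?addr0 ?add0r. Qed.
Lemma pr_block (M1 M2 N1 N2 : amod) (A : 'M[k]_(mdim N1, mdim M1)) (B : 'M[k]_(mdim N2, mdim M2)) :
  pr N1 N2 *m block_mx A 0 0 B = B *m pr M1 M2.
Proof. by rewrite /pr mul_row_block mul_mx_row ?mulmx1 ?mul1mx ?mulmx0 ?mul0mx ?addr0 ?add0r. Qed.
Lemma row_ilir (M1 M2 : amod) : row_mx (il M1 M2) (ir M1 M2) = 1%:M.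
Proof. by rewrite /il /ir -block_mxEh -scalar_mx_block. Qed.
Lemma col_plpr (M1 M2 : amod) : col_mx (pl M1 M2) (pr M1 M2) = 1%:M.
Proof. by rewrite /pl /pr -block_mxEv -scalar_mx_block. Qed.
Lemma adj_fsum (F1 G1 F2 G2 : endofunctor k n) :
  adj F1 G1 -> adj F2 G2 -> adj (fsum F1 F2) (fsum G1 G2).
Proof.
move=> [e1 [p1 [[he1 ne1] [[hp1 np1] [t1 s1]]]]] [e2 [p2 [[he2 ne2] [[hp2 np2] [t2 s2]]]]].
pose FM M := msum (fobj F1 M) (fobj F2 M).
pose GM M := msum (fobj G1 M) (fobj G2 M).
pose eta M := col_mx (Fm G1 (fobj F1 M) (FM M) (il _ _) *m e1 M)
                        (Fm G2 (fobj F2 M) (FM M) (ir _ _) *m e2 M).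
pose eps M := row_mx (p1 M *m Fm F1 (GM M) (fobj G1 M) (pl _ _))
                        (p2 M *m Fm F2 (GM M) (fobj G2 M) (pr _ _)).
have heta : forall M, homm M (msum (fobj G1 (FM M)) (fobj G2 (FM M))) (eta M).
  move=> M; apply: hom_colmx.
    apply: hom_comp (he1 M) _; apply: fmap_hom'; exact: hom_il.
  apply: hom_comp (he2 M) _; apply: fmap_hom'; exact: hom_ir.
have heps : forall M, homm (msum (fobj F1 (GM M)) (fobj F2 (GM M))) M (eps M).
  move=> M; apply: hom_rowmx.
    apply: hom_comp (hp1 M); apply: fmap_hom'; exact: hom_pl.
  apply: hom_comp (hp2 M); apply: fmap_hom'; exact: hom_pr.
exists eta; exists eps.
have ne1' : forall M N f, homm M N f -> e1 N *m f = Fm G1 _ _ (Fm F1 M N f) *m e1 M.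
  by move=> M N f hf; have := ne1 _ _ f hf.
have ne2' : forall M N f, homm M N f -> e2 N *m f = Fm G2 _ _ (Fm F2 M N f) *m e2 M.
  by move=> M N f hf; have := ne2 _ _ f hf.
have np1' : forall M N f, homm M N f -> p1 N *m Fm F1 _ _ (Fm G1 M N f) = f *m p1 M.
  by move=> M N f hf; have := np1 _ _ f hf.
have np2' : forall M N f, homm M N f -> p2 N *m Fm F2 _ _ (Fm G2 M N f) = f *m p2 M.
  by move=> M N f hf; have := np2 _ _ f hf.
split; [split|split; [split|split]].
- exact: heta.
- move=> M N f hf /=; rewrite mul_col_mx mul_block_col !mul0mx addr0 add0r.
  have hB := fmap_hom' (fsum F1 F2) hf.
  congr col_mx.
    rewrite -mulmxA ne1' // mulmxA -(fmapM G1 (fmap_hom' F1 hf) (hom_il _ _)).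
    rewrite mulmxA -(fmapM G1 (hom_il _ _) hB) /=; congr (Fm G1 _ _ _ *m _).
    by rewrite block_il.
  rewrite -mulmxA ne2' // mulmxA -(fmapM G2 (fmap_hom' F2 hf) (hom_ir _ _)).
  rewrite mulmxA -(fmapM G2 (hom_ir _ _) hB) /=; congr (Fm G2 _ _ _ *m _).
  by rewrite block_ir.
- exact: heps.
- move=> M N f hf /=; rewrite mul_row_block mul_mx_row !mulmx0 addr0 add0r.
  have hB := fmap_hom' (fsum G1 G2) hf.
  congr row_mx.
    rewrite -mulmxA -(fmapM F1 hB (hom_pl _ _)) /= pl_block.
    by rewrite (fmapM F1 (hom_pl _ _) (fmap_hom' G1 hf)) mulmxA np1' // mulmxA.
  rewrite -mulmxA -(fmapM F2 hB (hom_pr _ _)) /= pr_block.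
  by rewrite (fmapM F2 (hom_pr _ _) (fmap_hom' G2 hf)) mulmxA np2' // mulmxA.
- move=> M /=; rewrite mul_row_block !mulmx0 addr0 add0r.
  rewrite -row_ilir; congr row_mx.
    rewrite -mulmxA -(fmapM F1 (heta M) (hom_pl _ _)) /= pl_col.
    have hil : homm (fobj G1 (fobj F1 M)) (fobj G1 (FM M)) (Fm G1 _ _ (il (fobj F1 M) (fobj F2 M))).
      by apply: fmap_hom'; apply: hom_il.
    rewrite (fmapM F1 (he1 M) hil) mulmxA (np1' _ _ _ (hom_il (fobj F1 M) (fobj F2 M))).
    by rewrite -mulmxA t1 mulmx1.
  rewrite -mulmxA -(fmapM F2 (heta M) (hom_pr _ _)) /= pr_col.
  have hir : homm (fobj G2 (fobj F2 M)) (fobj G2 (FM M)) (Fm G2 _ _ (ir (fobj F1 M) (fobj F2 M))).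
    by apply: fmap_hom'; apply: hom_ir.
  rewrite (fmapM F2 (he2 M) hir) mulmxA (np2' _ _ _ (hom_ir (fobj F1 M) (fobj F2 M))).
  by rewrite -mulmxA t2 mulmx1.
- move=> M /=; rewrite mul_block_col !mul0mx addr0 add0r.
  rewrite -col_plpr; congr col_mx.
    have hp : homm (fobj F1 (GM M)) M (p1 M *m Fm F1 _ _ (pl (fobj G1 M) (fobj G2 M))).
      by apply: hom_comp (hp1 M); apply: fmap_hom'; apply: hom_pl.
    rewrite mulmxA -(fmapM G1 (hom_il _ _) (hom_rowmx hp _)) /=; last first.
      by apply: hom_comp (hp2 M); apply: fmap_hom'; apply: hom_pr.
    rewrite row_il (fmapM G1 (fmap_hom' F1 (hom_pl _ _)) (hp1 M)) -mulmxA -ne1'.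
      by rewrite mulmxA s1 mul1mx.
    exact: hom_pl.
  have hp : homm (fobj F2 (GM M)) M (p2 M *m Fm F2 _ _ (pr (fobj G1 M) (fobj G2 M))).
    by apply: hom_comp (hp2 M); apply: fmap_hom'; apply: hom_pr.
  rewrite mulmxA -(fmapM G2 (hom_ir _ _) (hom_rowmx _ hp)) /=; last first.
    by apply: hom_comp (hp1 M); apply: fmap_hom'; apply: hom_pl.
  rewrite row_ir (fmapM G2 (fmap_hom' F2 (hom_pr _ _)) (hp2 M)) -mulmxA -ne2'.
    by rewrite mulmxA s2 mul1mx.
  exact: hom_pr.
Qed.
Lemma adj_fmuln (F G : endofunctor k n) c : adj F G -> adj (fmuln F c) (fmuln G c).
Proof.
move=> h; elim: c => [|c IH]; first exact: adj_fzero.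
exact: adj_fsum.
Qed.

Lemma nat_inv (F G : endofunctor k n) (th : forall M, 'M[k]_(mdim (fobj G M), mdim (fobj F M)))
  (th' : forall M, 'M[k]_(mdim (fobj F M), mdim (fobj G M))) :
  natural th -> (forall M, th' M *m th M = 1%:M /\ th M *m th' M = 1%:M) -> natural th'.
Proof.
move=> [hth nth] hinv; split.
  by move=> M; have [h1 h2] := hinv M; apply: hom_inv (hth M) h1 h2.
move=> M N f hf; have [a1 a2] := hinv M; have [b1 b2] := hinv N.
rewrite -[LHS]mulmx1 -a2 !mulmxA -(mulmxA (th' N)) -nth // mulmxA b1 mul1mx //.
Qed.

Lemma adj_transfer (F G F' G' : endofunctor k n)
  (th : forall M, 'M[k]_(mdim (fobj F' M), mdim (fobj F M)))
  (th' : forall M, 'M[k]_(mdim (fobj F M), mdim (fobj F' M)))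
  (ph : forall M, 'M[k]_(mdim (fobj G' M), mdim (fobj G M)))
  (ph' : forall M, 'M[k]_(mdim (fobj G M), mdim (fobj G' M))) :
  adj F G -> natural th -> (forall M, th' M *m th M = 1%:M /\ th M *m th' M = 1%:M) ->
  natural ph -> (forall M, ph' M *m ph M = 1%:M /\ ph M *m ph' M = 1%:M) ->
  adj F' G'.
Proof.
move=> [e [p [[he ne] [[hp np] [t s]]]]] Nth ith Nph iph.
have [hth nth] := Nth; have [hth' nth'] := nat_inv Nth ith.
have [hph nph] := Nph; have [hph' nph'] := nat_inv Nph iph.
have ne' : forall M N f, homm M N f -> e N *m f = Fm G _ _ (Fm F M N f) *m e M.
  by move=> M N f hf; have := ne _ _ f hf.
have np' : forall M N f, homm M N f -> p N *m Fm F _ _ (Fm G M N f) = f *m p M.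
  by move=> M N f hf; have := np _ _ f hf.
pose eta M := ph (fobj F' M) *m Fm G (fobj F M) (fobj F' M) (th M) *m e M.
pose eps M := p M *m Fm F (fobj G' M) (fobj G M) (ph' M) *m th' (fobj G' M).
have heta : forall M, homm M (fobj G' (fobj F' M)) (eta M).
  move=> M; apply: hom_comp (he M) _; apply: hom_comp (hph _).
  by apply: fmap_hom'; apply: hth.
have heps : forall M, homm (fobj F' (fobj G' M)) M (eps M).
  move=> M; apply: hom_comp (hth' _) _; apply: hom_comp (hp M).
  by apply: fmap_hom'; apply: hph'.
exists eta; exists eps.
split; [split|split; [split|split]].
- exact: heta.
- move=> M N f hf /=; rewrite /eta -!mulmxA ne' // !mulmxA.
  rewrite -(mulmxA _ (Fm G _ _ (th N))) -(fmapM G (fmap_hom' F hf) (hth N)) nth //.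
  rewrite (fmapM G (hth M) (fmap_hom' F' hf)) !mulmxA nph //.
  exact: fmap_hom'.
- exact: heps.
- move=> M N f hf /=; rewrite /eps -!mulmxA nth' //; last by apply: fmap_hom'.
  rewrite !mulmxA -(mulmxA _ (Fm F _ _ (ph' N))) -(fmapM F (fmap_hom' G' hf) (hph' N)).
  by rewrite nph' // (fmapM F (hph' M) (fmap_hom' G hf)) mulmxA np' //.
- move=> M /=; rewrite /eps -!mulmxA nth'; [|exact: heta].
  rewrite !mulmxA -(mulmxA _ (Fm F _ _ (ph' _))) -(fmapM F (heta M) (hph' _)).
  rewrite /eta !mulmxA (proj1 (iph _)) mul1mx.
  rewrite (fmapM F (he M) (fmap_hom' G (hth M))) mulmxA np' //.
  by rewrite -(mulmxA (th M)) t mulmx1 (proj2 (ith M)).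
- move=> M /=; rewrite /eta !mulmxA -nph; [|exact: heps].
  rewrite -(mulmxA (ph M)) -(fmapM G (hth _) (heps M)) /eps -(mulmxA _ (th' _)) (proj1 (ith _)) mulmx1.
  rewrite (fmapM G (fmap_hom' F (hph' M)) (hp M)) -!mulmxA -ne'; last exact: hph'.
  by rewrite (mulmxA (Fm G _ _ (p M))) s mul1mx (proj2 (iph M)).
Qed.
Lemma mxnatE m (A : 'M[nat]_m) c a b : (A *+ c) a b = (A a b * c)%N.
Proof.
elim: c => [|c IH]; first by rewrite mulr0n mxE muln0.
by rewrite mulrS mxE IH mulnS.
Qed.

Definition pairs : seq ('I_n * 'I_n) := index_enum _.

Definition GX (X : 'M[nat]_n) : endofunctor k n :=
  foldr (fun p acc => fsum (fmuln (Elt p.1 p.2) (X p.1 p.2)) acc) (fzero k n) pairs.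
Definition GXT (X : 'M[nat]_n) : endofunctor k n :=
  foldr (fun p acc => fsum (fmuln (Elt p.2 p.1) (X p.1 p.2)) acc) (fzero k n) pairs.

Lemma adj_GX X : adj (GX X) (GXT X).
Proof.
rewrite /GX /GXT; elim: pairs => [|p s IH] /=; first exact: adj_fzero.
by apply: adj_fsum => //; apply: adj_fmuln; apply: adj_Elt.
Qed.

Lemma MF_foldrT (T : Type) (s : seq T) (G : T -> endofunctor k n) :
  MF (foldr (fun j acc => fsum (G j) acc) (fzero k n) s) = \sum_(j <- s) MF (G j).
Proof.
elim: s => [|x s IH]; first by rewrite big_nil MF_fzero.
by rewrite big_cons /= MF_fsum IH.
Qed.

Lemma MF_GX X : MF (GX X) = X.
Proof.
rewrite /GX (@MF_foldrT _ pairs (fun p => fmuln (Elt p.1 p.2) (X p.1 p.2))).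
apply/matrixP => a b; rewrite summxE /pairs (bigD1 (a, b)) //=.
rewrite MF_fmuln MF_Elt mxnatE mxE !eqxx big1 ?addr0 ?addn0 ?mul1n //.
move=> [c d] /= hcd; rewrite MF_fmuln MF_Elt mxnatE mxE.
suff -> : ((a == c) && (b == d)) = false by [].
by apply/negbTE; apply: contra hcd => /andP [/eqP -> /eqP ->].
Qed.

Lemma MF_GXT X : MF (GXT X) = X^T.
Proof.
rewrite /GXT (@MF_foldrT _ pairs (fun p => fmuln (Elt p.2 p.1) (X p.1 p.2))).
apply/matrixP => a b; rewrite summxE /pairs (bigD1 (b, a)) //=.
rewrite MF_fmuln MF_Elt mxnatE !mxE !eqxx big1 ?addr0 ?addn0 ?mul1n //.
move=> [c d] /= hcd; rewrite MF_fmuln MF_Elt mxnatE mxE.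
suff -> : ((a == d) && (b == c)) = false by [].
by apply/negbTE; apply: contra hcd => /andP [/eqP -> /eqP ->].
Qed.

Lemma etaFG_natural (F G : endofunctor k n) : natural (etaFG F G).
Proof. by split; [apply: hom_etaFG | move=> *; apply: nat2]. Qed.

Lemma sym_selfadjoint (F : endofunctor k n) : symmetric_mx (MF F) -> selfadjoint F.
Proof.
move=> hs; set X := MF F.
have e1 : MF (GX X) = MF F by rewrite MF_GX.
have e2 : MF (GXT X) = MF F by rewrite MF_GXT hs.
apply/adj_selfadjoint.
apply: (adj_transfer (adj_GX X) (etaFG_natural (GX X) F) _ (etaFG_natural (GXT X) F)).
  by move=> M; split; apply: eta_inv.
by move=> M; split; apply: eta_inv.
Qed.
End Main.

Theorem proposition25 (k : closedFieldType) (n : nat) :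
  (* (i) *)
  (forall F : endofunctor k n, selfadjoint F <-> symmetric_mx (MF F)) /\
  (* (ii) *)
  (forall g h : {poly nat},
    (* F |-> M_F sends functors with g(F) ~ h(F) to solutions of g(X) = h(X) *)
    (forall F : endofunctor k n,
        fiso (fpoly g F) (fpoly h F) -> mxpoly_nat g (MF F) = mxpoly_nat h (MF F)) /\
    (* it is well defined on isomorphism classes *)
    (forall F G : endofunctor k n, fiso F G -> MF F = MF G) /\
    (* injective on isomorphism classes *)
    (forall F G : endofunctor k n,
        fiso (fpoly g F) (fpoly h F) -> fiso (fpoly g G) (fpoly h G) ->
        MF F = MF G -> fiso F G) /\
    (* surjective onto the solutions *)
    (forall X : 'M[nat]_n, mxpoly_nat g X = mxpoly_nat h X ->
        exists F : endofunctor k n, fiso (fpoly g F) (fpoly h F) /\ MF F = X) /\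
    (* restriction: selfadjoint ones go to symmetric solutions ... *)
    (forall F : endofunctor k n,
        fiso (fpoly g F) (fpoly h F) -> selfadjoint F -> symmetric_mx (MF F)) /\
    (* ... and every symmetric solution comes from a selfadjoint one *)
    (forall X : 'M[nat]_n, mxpoly_nat g X = mxpoly_nat h X -> symmetric_mx X ->
        exists F : endofunctor k n,
          selfadjoint F /\ fiso (fpoly g F) (fpoly h F) /\ MF F = X)).
Proof.
split.
  move=> F; split; [exact: selfadjoint_sym | exact: sym_selfadjoint].
move=> g h; split; [|split; [|split; [|split; [|split]]]].
- by move=> F hF; rewrite -!MF_fpoly; apply: fiso_MF.
- exact: fiso_MF.
- by move=> F G _ _ e; apply: MF_inj.
- move=> X e; exists (GX k X); split; last exact: MF_GX.
  by apply: MF_inj; rewrite !MF_fpoly MF_GX.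
- by move=> F _; apply: selfadjoint_sym.
- move=> X e hs; exists (GX k X); split; [|split]; last exact: MF_GX.
    by apply: sym_selfadjoint; rewrite MF_GX.
  by apply: MF_inj; rewrite !MF_fpoly MF_GX.
Qed.
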